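(* Let $\delta$ be a natural number and let $\xi,Y$ be real numbers with $1\le\xi\le Y^\delta$. Then there exist positive real numbers $x_1,\dots,x_\delta$ such that \[ \prod_{n=1}^\delta x_n=\xi,\qquad \min\bigl(\xi^{2^n/(2^{\delta+1}-2)},\,Y^{2^n/2^\delta}\bigr)\le x_n\le Y\quad(1\le n\le\delta). \] *)

(* Defs.v *)
From Stdlib Require Export Reals.
Open Scope R_scope.

Fixpoint prod_from1 (x : nat -> R) (d : nat) : R :=
  match d with
  | O => 1
  | S d' => prod_from1 x d' * x (S d')
  end.

(* Main.v *)
Require Import Defs.
From Stdlib Require Import Reals Lra Lia Psatz Arith.
Open Scope R_scope.

Fixpoint sum1 (x : nat -> R) (d : nat) : R :=
  match d with
  | O => 0
  | S d' => sum1 x d' + x (S d')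
  end.

Lemma sum1_ext (f g : nat -> R) k :
  (forall n, (1 <= n <= k)%nat -> f n = g n) -> sum1 f k = sum1 g k.
Proof.
  induction k as [|k IH]; intros H; simpl; [reflexivity|].
  rewrite IH by (intros; apply H; lia). rewrite (H (S k)) by lia. reflexivity.
Qed.

Lemma sum1_scal c (f : nat -> R) k : sum1 (fun n => c * f n) k = c * sum1 f k.
Proof. induction k; simpl; [ring|rewrite IHk; ring]. Qed.

Lemma sum1_pos (f : nat -> R) k : (forall n, (1 <= n <= k)%nat -> 0 < f n) ->
  (1 <= k)%nat -> 0 < sum1 f k.
Proof.
  induction k as [|k IH]; intros H Hk; simpl; [lia|].
  destruct k as [|k].
  - simpl. specialize (H 1%nat). assert (0 < f 1%nat) by (apply H; lia). lra.
  - assert (0 < sum1 f (S k)) by (apply IH; [intros; apply H; lia | lia]).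
    assert (0 < f (S (S k))) by (apply H; lia). lra.
Qed.

Lemma sum1_nonneg (f : nat -> R) k : (forall n, (1 <= n <= k)%nat -> 0 < f n) ->
  0 <= sum1 f k.
Proof.
  intros H. destruct k. simpl; lra. left; apply sum1_pos; auto; lia.
Qed.

Lemma prod_exp (l : nat -> R) k : prod_from1 (fun n => exp (l n)) k = exp (sum1 l k).
Proof.
  induction k; simpl. rewrite exp_0; reflexivity. rewrite IHk, exp_plus; reflexivity.
Qed.

Lemma sum_pow2 k : sum1 (fun n => 2 ^ n) k = 2 ^ (S k) - 2.
Proof. induction k; simpl in *; [lra|]. rewrite IHk. ring. Qed.

Lemma ln_le' x y : 0 < x -> x <= y -> ln x <= ln y.
Proof. intros H [H1|H1]. left; apply ln_increasing; auto. subst; lra. Qed.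

Lemma exp_le_exp' x y : x <= y -> exp x <= exp y.
Proof. intros [H|H]. left; apply exp_increasing; auto. subst; lra. Qed.

Lemma gen : forall k (w : nat -> R) M L,
  (forall n, (1 <= n <= k)%nat -> 0 < w n) ->
  (forall n m, (1 <= n)%nat -> (n <= m)%nat -> (m <= k)%nat -> w n <= w m) ->
  0 <= L -> L <= INR k * M ->
  exists l : nat -> R, sum1 l k = L /\
    forall n, (1 <= n <= k)%nat -> l n <= M /\ Rmin (L / sum1 w k * w n) M <= l n.
Proof.
  induction k as [|k IH]; intros w M L Hpos Hmon HL HLk.
  - simpl in HLk. exists (fun _ => 0). split. simpl; lra. intros; lia.
  - set (W := sum1 w (S k)).
    assert (HW : 0 < W) by (apply sum1_pos; auto; lia).
    set (c := L / W).
    assert (HcW : c * W = L) by (unfold c; field; lra).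
    assert (Hc : 0 <= c) by (unfold c; apply Rmult_le_pos; [lra| left; apply Rinv_0_lt_compat; lra]).
    assert (Hwk : 0 < w (S k)) by (apply Hpos; lia).
    destruct (Rle_dec (c * w (S k)) M) as [Hle|Hgt].
    + exists (fun n => c * w n). split.
      * rewrite sum1_scal. exact HcW.
      * intros n Hn. split.
        -- apply Rle_trans with (c * w (S k)); auto.
           apply Rmult_le_compat_l; auto. apply Hmon; lia.
        -- apply Rmin_l.
    + apply Rnot_le_lt in Hgt.
      set (W' := sum1 w k).
      assert (HWW : W = W' + w (S k)) by reflexivity.
      assert (HW'0 : 0 <= W') by (apply sum1_nonneg; intros; apply Hpos; lia).
      assert (HLM : M < L).
      { assert (c * w (S k) <= c * W) by (apply Rmult_le_compat_l; lra).
        lra. }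
      rewrite S_INR in HLk.
      destruct (IH w M (L - M)) as [l' [Hs Hb]].
      { intros; apply Hpos; lia. }
      { intros; apply Hmon; lia. }
      { lra. }
      { lra. }
      exists (fun n => if Nat.eqb n (S k) then M else l' n). split.
      * simpl. rewrite Nat.eqb_refl.
        rewrite (sum1_ext _ l'). lra.
        intros n Hn. assert (Nat.eqb n (S k) = false) as -> by (apply Nat.eqb_neq; lia). reflexivity.
      * intros n Hn. destruct (Nat.eqb_spec n (S k)) as [E|E].
        -- split. lra. apply Rmin_r.
        -- assert (Hn' : (1 <= n <= k)%nat) by lia.
           destruct (Hb n Hn') as [Hb1 Hb2]. split; auto.
           assert (HW' : 0 < W') by (apply sum1_pos; [intros; apply Hpos; lia | lia]).
           set (c' := (L - M) / W').
           assert (Hc'W : c' * W' = L - M) by (unfold c'; field; lra).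
           assert (Hcc : c <= c').
           { destruct (Rle_dec c c') as [|Hn0]; auto. apply Rnot_le_lt in Hn0.
             assert ((c - c') * W' > 0) by (apply Rmult_lt_0_compat; lra).
             assert (c * W' = c * W - c * w (S k)) by (rewrite HWW; ring).
             assert ((c - c') * W' = c * W' - c' * W') by ring. lra. }
           fold W'. fold c'. fold W in Hb2 |- *. fold c.
           assert (Hwn : 0 < w n) by (apply Hpos; lia).
           assert (c * w n <= c' * w n) by (apply Rmult_le_compat_r; lra).
           change ((L - M) / sum1 w k) with c' in Hb2.
           unfold Rmin in *. destruct (Rle_dec (c * w n) M); destruct (Rle_dec (c' * w n) M); lra.
Qed.

Theorem lemma8 (delta : nat) (xi Y : R) (hY : 0 < Y)
  (h1 : 1 <= xi) (h2 : xi <= Y ^ delta) :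
  exists x : nat -> R,
    (forall n : nat, (1 <= n <= delta)%nat -> 0 < x n) /\
    prod_from1 x delta = xi /\
    (forall n : nat, (1 <= n <= delta)%nat ->
       Rmin (Rpower xi (2 ^ n / (2 ^ (S delta) - 2)))
            (Rpower Y (2 ^ n / 2 ^ delta)) <= x n /\ x n <= Y).
Proof.
  set (L := ln xi). set (M := ln Y).
  assert (HL : 0 <= L) by (unfold L; rewrite <- ln_1; apply ln_le'; lra).
  assert (HLk : L <= INR delta * M).
  { unfold L, M. rewrite <- ln_pow by lra. apply ln_le'; lra. }
  destruct (gen delta (fun n => 2 ^ n) M L) as [l [Hs Hb]]; auto.
  { intros; apply pow_lt; lra. }
  { intros n m _ Hnm _. apply Rle_pow; [lra|lia]. }
  exists (fun n => exp (l n)). split; [|split].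
  - intros; apply exp_pos.
  - rewrite prod_exp, Hs. unfold L. apply exp_ln. lra.
  - intros n Hn. destruct (Hb n Hn) as [Hb1 Hb2].
    rewrite sum_pow2 in Hb2.
    assert (HS : 0 < 2 ^ S delta - 2).
    { rewrite <- sum_pow2. apply sum1_pos; [intros; apply pow_lt; lra| lia]. }
    assert (HM : 0 <= M).
    { assert (1 <= INR delta) by (apply (le_INR 1); lia).
      destruct (Rle_dec 0 M); auto. nra. }
    split.
    + unfold Rpower. fold L. fold M.
      assert (Hpn : 2 ^ n <= 2 ^ delta) by (apply Rle_pow; [lra|lia]).
      assert (Hpd : 0 < 2 ^ delta) by (apply pow_lt; lra).
      assert (Hb0 : 2 ^ n / 2 ^ delta <= 1).
      { apply Rmult_le_reg_r with (2 ^ delta); auto. field_simplify; lra. }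
      assert (Hb00 : 0 <= 2 ^ n / 2 ^ delta).
      { apply Rmult_le_pos; [left; apply pow_lt; lra | left; apply Rinv_0_lt_compat; lra]. }
      assert (E : L / (2 ^ S delta - 2) * 2 ^ n = 2 ^ n / (2 ^ S delta - 2) * L) by (field; lra).
      rewrite E in Hb2.
      assert (HbM : 2 ^ n / 2 ^ delta * M <= 1 * M) by (apply Rmult_le_compat_r; lra).
      unfold Rmin in Hb2 |- *.
      destruct (Rle_dec (2 ^ n / (2 ^ S delta - 2) * L) M) as [Hc|Hc].
      * destruct (Rle_dec (exp (2 ^ n / (2 ^ S delta - 2) * L)) (exp (2 ^ n / 2 ^ delta * M))).
        -- apply exp_le_exp'; lra.
        -- apply Rnot_le_lt in n0. left. apply Rlt_le_trans with (1 := n0). apply exp_le_exp'; lra.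
      * destruct (Rle_dec (exp (2 ^ n / (2 ^ S delta - 2) * L)) (exp (2 ^ n / 2 ^ delta * M))).
        -- apply Rle_trans with (exp (2 ^ n / 2 ^ delta * M)); auto.
           apply exp_le_exp'. lra.
        -- apply exp_le_exp'. lra.
    + unfold M in Hb1. rewrite <- (exp_ln Y) by lra. apply exp_le_exp'. lra.
Qed.
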